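(* Let $f:\mathbb{R}\to\mathbb{R}$ be a differentiable, increasing, concave function and $b'<b$ real numbers. Let $\alpha_*\in\mathbb{R}$ satisfy $f(\alpha_* )=b'$ and let $\alpha_0\in\mathbb{R}$ satisfy $f(\alpha_0)\le b$. Consider the Newton–Dinkelbach method started at $\alpha_0$: while $f(\alpha_t)<b'$, set $\alpha_{t+1}:=\alpha_t+\frac{b-f(\alpha_t)}{f'(\alpha_t)}$; output the first $\alpha_t$ with $f(\alpha_t)\ge b'$. Then it outputs $\alpha_0$ if $f(\alpha_0)\ge b'$; otherwise it outputs $\hat\alpha$ satisfying $f(\hat\alpha)\in[b',b]$ in at most \[T:=1+\left\lceil\log_{\frac{1}{1-\epsilon}}\left(\max\left\{1,\frac{D_f(\alpha_*\mid\alpha_0)}{b-b'}\right\}\right)\right\rceil\] iterations, for any $\epsilon\in(0,1)$ satisfying $\epsilon(b-f(\alpha_0))\le b-b'$, where $D_f(\beta\mid\alpha):=f'(\alpha)(\beta-\alpha)+f(\alpha)-f(\beta)$ is the Bregman divergence of $f$. *)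

(* Defs.v *)
From Stdlib Require Import Reals ZArith.
Open Scope R_scope.

Definition Rceil (x : R) : Z := (- Int_part (- x))%Z.

Definition logb (c x : R) : R := ln x / ln c.

Definition bregman (f f' : R -> R) (beta alpha : R) : R :=
  f' alpha * (beta - alpha) + f alpha - f beta.

Fixpoint nd_iter (f f' : R -> R) (b a0 : R) (t : nat) : R :=
  match t with
  | O => a0
  | S s => let a := nd_iter f f' b a0 s in a + (b - f a) / f' a
  end.

(* t is the first index at which the stopping test f(alpha_t) >= b' holds,
   i.e. the method outputs alpha_t after t iterations *)
Definition nd_stops_at (f f' : R -> R) (b b' a0 : R) (t : nat) : Prop :=
  b' <= f (nd_iter f f' b a0 t) /\
  forall s, (s < t)%nat -> f (nd_iter f f' b a0 s) < b'.

Definition concave (f : R -> R) : Prop :=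
  forall x y l, 0 <= l <= 1 -> l * f x + (1 - l) * f y <= f (l * x + (1 - l) * y).

(* Main.v *)
Require Import Defs.
From Stdlib Require Import Reals ZArith.
From Stdlib Require Import Lra Lia Psatz.
Open Scope R_scope.

Lemma tangent_ineq (f f' : R -> R)
  (Hder : forall x, derivable_pt_lim f x (f' x)) (Hconc : concave f) x y :
  f y <= f x + f' x * (y - x).
Proof.
  destruct (Req_dec y x) as [->|Hne]; [lra|].
  apply Rnot_lt_le; intro HK.
  set (K := f y - f x - f' x * (y - x)).
  assert (HK0 : 0 < K) by (unfold K; lra).
  set (d := Rabs (y - x)).
  assert (Hd0 : 0 < d) by (apply Rabs_pos_lt; lra).
  destruct (Hder x (K / d)) as [delta Hdel].
  { apply Rdiv_lt_0_compat; lra. }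
  pose proof (cond_pos delta) as Hdp.
  set (l := Rmin 1 (delta / (2 * d))).
  assert (Hl0 : 0 < l).
  { unfold l; apply Rmin_glb_lt; [lra|]. apply Rdiv_lt_0_compat; lra. }
  assert (Hl1 : l <= 1) by (unfold l; apply Rmin_l).
  assert (Hl2 : l <= delta / (2 * d)) by (unfold l; apply Rmin_r).
  assert (Hld : l * d < delta).
  { apply Rle_lt_trans with (delta / (2 * d) * d).
    - apply Rmult_le_compat_r; lra.
    - replace (delta / (2 * d) * d) with (delta / 2) by (field; lra). lra. }
  set (h := l * (y - x)).
  assert (Hh : Rabs h = l * d).
  { unfold h, d. rewrite Rabs_mult, Rabs_right; lra. }
  assert (Hhne : h <> 0).
  { intro E. rewrite E, Rabs_R0 in Hh. assert (0 < l * d) by (apply Rmult_lt_0_compat; lra). lra. }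
  specialize (Hdel h Hhne).
  assert (Hhd : Rabs h < delta) by lra.
  specialize (Hdel Hhd).
  pose proof (Hconc y x l (conj (Rlt_le _ _ Hl0) Hl1)) as Hc.
  replace (l * y + (1 - l) * x) with (x + h) in Hc by (unfold h; ring).
  set (q := (f (x + h) - f x) / h - f' x) in Hdel.
  assert (Eq : f (x + h) - f x - f' x * h = q * h) by (unfold q; field; exact Hhne).
  assert (Hge : l * K <= f (x + h) - f x - f' x * h).
  { assert (f' x * h = l * (f' x * (y - x))) by (unfold h; ring). unfold K. nra. }
  assert (Habs : Rabs (q * h) < l * K).
  { rewrite Rabs_mult, Hh.
    apply Rle_lt_trans with (Rabs q * (l * d)); [lra|].
    replace (l * K) with (K / d * (l * d)) by (field; lra).
    apply Rmult_lt_compat_r; [nra | exact Hdel]. }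
  rewrite <- Eq in Habs.
  pose proof (Rle_abs (f (x + h) - f x - f' x * h)). lra.
Qed.

Lemma first_or_none (P : nat -> Prop) (Hdec : forall n, P n \/ ~ P n) :
  forall n, (forall s, (s <= n)%nat -> ~ P s) \/
            exists t, P t /\ forall s, (s < t)%nat -> ~ P s.
Proof.
  induction n as [|n IH].
  - destruct (Hdec 0%nat) as [H|H].
    + right. exists 0%nat. split; [exact H | intros; lia].
    + left. intros s Hs. replace s with 0%nat by lia. exact H.
  - destruct IH as [IH|IH]; [|right; exact IH].
    destruct (Hdec (S n)) as [H|H].
    + right. exists (S n). split; [exact H|]. intros s Hs. apply IH. lia.
    + left. intros s Hs. destruct (Nat.eq_dec s (S n)) as [->|Hne]; [exact H|].
      apply IH. lia.
Qed.

Lemma Rceil_ge (x : R) : x <= IZR (Rceil x).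
Proof.
  unfold Rceil. rewrite opp_IZR.
  destruct (base_Int_part (- x)) as [H1 _]. lra.
Qed.

Theorem theorem2p20 (f f' : R -> R) (b b' astar a0 : R)
  (Hder : forall x, derivable_pt_lim f x (f' x))
  (Hinc : forall x y, x <= y -> f x <= f y)
  (Hconc : concave f)
  (Hbb : b' < b)
  (Hstar : f astar = b')
  (H0 : f a0 <= b) :
  (b' <= f a0 -> nd_stops_at f f' b b' a0 0 /\ nd_iter f f' b a0 0 = a0) /\
  (f a0 < b' ->
    forall eps, 0 < eps < 1 -> eps * (b - f a0) <= b - b' ->
    exists t, nd_stops_at f f' b b' a0 t /\
      b' <= f (nd_iter f f' b a0 t) <= b /\
      (Z.of_nat t <= 1 + Rceil (logb (1 / (1 - eps))
                          (Rmax 1 (bregman f f' astar a0 / (b - b')))))%Z).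
Proof.
  split.
  { intro H. split; [split; [exact H | intros s Hs; lia] | reflexivity]. }
  intros Hlt eps Heps Heb.
  set (a := nd_iter f f' b a0).
  assert (Ha : forall t, a (S t) = a t + (b - f (a t)) / f' (a t)) by reflexivity.
  assert (Ha0 : a 0%nat = a0) by reflexivity.
  pose proof (tangent_ineq f f' Hder Hconc) as Htan.
  assert (L1 : forall t, f (a t) < b' -> a t < astar /\ 0 < f' (a t)).
  { intros t Ht.
    assert (Hs : a t < astar).
    { destruct (Rlt_le_dec (a t) astar) as [r|r]; auto. apply Hinc in r. lra. }
    split; auto. apply Rnot_le_lt; intro Hn.
    pose proof (Htan (a t) astar). nra. }
  assert (L2 : forall t, f (a t) < b' ->
            a t <= a (S t) /\ f (a t) <= f (a (S t)) /\ f (a (S t)) <= b).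
  { intros t Ht. destruct (L1 t Ht) as [_ Hp].
    assert (Hq : 0 <= (b - f (a t)) / f' (a t)).
    { apply Rmult_le_pos; [lra | left; apply Rinv_0_lt_compat; lra]. }
    assert (Hle : a t <= a (S t)) by (rewrite Ha; lra).
    split; [exact Hle|]. split; [apply Hinc; exact Hle|].
    pose proof (Htan (a t) (a (S t))) as T. rewrite Ha in T |- *.
    replace (f' (a t) * (a t + (b - f (a t)) / f' (a t) - a t)) with (b - f (a t)) in T
      by (field; lra). lra. }
  assert (Mono : forall t, (forall s, (s <= t)%nat -> f (a s) < b') -> f a0 <= f (a t)).
  { induction t as [|t IH]; intros Hall.
    - rewrite Ha0; lra.
    - assert (f a0 <= f (a t)) by (apply IH; intros; apply Hall; lia).
      destruct (L2 t) as [_ [? _]]; [apply Hall; lia|]. lra. }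
  set (D := fun t => bregman f f' astar (a t)).
  assert (L3 : forall t, f (a t) < b' -> f (a (S t)) < b' -> f a0 <= f (a t) ->
            b - b' < D t /\ D (S t) <= (1 - eps) * D t).
  { intros t Ht Ht1 Hm.
    destruct (L1 t Ht) as [Hs Hp]. destruct (L1 (S t) Ht1) as [Hs1 Hp1].
    set (x := a t) in *. set (y := a (S t)) in *.
    set (q := (b - f x) / f' x).
    assert (Hy : y = x + q) by (unfold y, q, x; apply Ha).
    assert (Hfq : f' x * q = b - f x) by (unfold q; field; lra).
    assert (HD : D t = f' x * (astar - y) + (b - b')).
    { unfold D, bregman. fold x. rewrite Hy, Hstar. replace (f' x * (astar - (x + q))) with (f' x * (astar - x) - f' x * q) by ring. rewrite Hfq. ring. }
    assert (HD1 : D (S t) = f' y * (astar - y) + f y - b').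
    { unfold D, bregman. fold y. rewrite Hstar. ring. }
    split.
    - rewrite HD. assert (0 < f' x * (astar - y)) by (apply Rmult_lt_0_compat; lra). lra.
    - pose proof (Htan y x) as T. rewrite Hy in T.
      replace (x - (x + q)) with (- q) in T by ring. rewrite <- Hy in T.
      assert (H1 : f' y * (b - f x) <= f' x * (f y - f x)).
      { rewrite <- Hfq. nra. }
      assert (H2 : eps * (b - f x) <= b - f y) by nra.
      assert (H3 : f' y <= (1 - eps) * f' x).
      { assert (Hbx : 0 < b - f x) by lra.
        apply Rmult_le_reg_r with (b - f x); [exact Hbx|]. nra. }
      rewrite HD1, HD.
      assert (f' y * (astar - y) <= (1 - eps) * f' x * (astar - y)).
      { apply Rmult_le_compat_r; lra. }
      nra. }
  assert (Dpow : forall m, (forall s, (s <= m)%nat -> f (a s) < b') ->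
            D m <= (1 - eps) ^ m * D 0%nat).
  { induction m as [|m IH]; intros Hall.
    - simpl. lra.
    - destruct (L3 m) as [_ H]; [apply Hall; lia | apply Hall; lia | apply Mono; intros; apply Hall; lia|].
      assert (D m <= (1 - eps) ^ m * D 0%nat) by (apply IH; intros; apply Hall; lia).
      simpl. apply Rle_trans with ((1 - eps) * D m); [exact H|].
      rewrite Rmult_assoc. apply Rmult_le_compat_l; lra. }
  set (c := 1 / (1 - eps)).
  set (M := Rmax 1 (bregman f f' astar a0 / (b - b'))).
  set (L := logb c M).
  assert (Hc : 1 < c).
  { unfold c. apply Rmult_lt_reg_r with (1 - eps); [lra|].
    replace (1 / (1 - eps) * (1 - eps)) with 1 by (field; lra). lra. }
  assert (Hlnc : 0 < ln c) by (rewrite <- ln_1; apply ln_increasing; lra).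
  assert (HM1 : 1 <= M) by (unfold M; apply Rmax_l).
  assert (HlnM : 0 <= ln M).
  { destruct HM1 as [HM1|HM1]; [left; rewrite <- ln_1; apply ln_increasing; lra|].
    rewrite <- HM1, ln_1. lra. }
  assert (HL : 0 <= L) by (unfold L, logb; apply Rmult_le_pos; [lra | left; apply Rinv_0_lt_compat; lra]).
  assert (HcL := Rceil_ge L).
  assert (HR0 : (0 <= Rceil L)%Z).
  { assert (-1 < Rceil L)%Z by (apply lt_IZR; lra). lia. }
  assert (Bound : forall k, (forall s, (s <= k)%nat -> f (a s) < b') ->
            (Z.of_nat k <= Rceil L)%Z).
  { intros [|m] Hall; [simpl; lia|].
    assert (HDm := Dpow m (fun s Hs => Hall s ltac:(lia))).
    destruct (L3 m) as [HB _]; [apply Hall; lia | apply Hall; lia | apply Mono; intros; apply Hall; lia|].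
    set (p := (1 - eps) ^ m) in *.
    assert (Hp : 0 < p) by (apply pow_lt; lra).
    assert (Hcp : c ^ m * p = 1).
    { unfold p. rewrite <- Rpow_mult_distr.
      replace (c * (1 - eps)) with 1 by (unfold c; field; lra). apply pow1. }
    assert (Hcm : 0 < c ^ m) by (apply pow_lt; lra).
    assert (H1 : c ^ m * (b - b') < D 0%nat).
    { apply Rlt_le_trans with (c ^ m * (p * D 0%nat)).
      - apply Rmult_lt_compat_l; lra.
      - rewrite <- Rmult_assoc, Hcp. lra. }
    assert (H2 : c ^ m < M).
    { apply Rlt_le_trans with (bregman f f' astar a0 / (b - b')); [|unfold M; apply Rmax_r].
      apply Rmult_lt_reg_r with (b - b'); [lra|].
      replace (bregman f f' astar a0 / (b - b') * (b - b')) with (bregman f f' astar a0)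
        by (field; lra). exact H1. }
    assert (H3 : INR m * ln c < ln M).
    { rewrite <- ln_pow by lra. apply ln_increasing; lra. }
    assert (H4 : INR m < L).
    { unfold L, logb. apply Rmult_lt_reg_r with (ln c); [lra|].
      replace (ln M / ln c * ln c) with (ln M) by (field; lra). exact H3. }
    rewrite INR_IZR_INZ in H4.
    assert (Z.of_nat m < Rceil L)%Z by (apply lt_IZR; lra). lia. }
  destruct (first_or_none (fun s => b' <= f (a s)) (fun n => match Rle_dec b' (f (a n)) with left h => or_introl h | right h => or_intror h end)
              (S (Z.to_nat (Rceil L)))) as [Hnone|[t [Ht Hbef]]].
  { exfalso.
    assert (HH := Bound (S (Z.to_nat (Rceil L)))
                    (fun s Hs => Rnot_le_lt _ _ (Hnone s Hs))).
    rewrite Nat2Z.inj_succ, Z2Nat.id in HH by lia. lia. }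
  exists t.
  assert (Hbef' : forall s, (s < t)%nat -> f (a s) < b').
  { intros s Hs. apply Rnot_le_lt. apply Hbef. exact Hs. }
  split; [split; [exact Ht | exact Hbef']|].
  split.
  - split; [exact Ht|]. destruct t as [|t]; [exact H0|].
    destruct (L2 t) as [_ [_ ?]]; [apply Hbef'; lia | assumption].
  - change (Z.of_nat t <= 1 + Rceil L)%Z. destruct t as [|m]; [change (0 <= 1 + Rceil L)%Z; lia|].
    assert (Z.of_nat m <= Rceil L)%Z by (apply Bound; intros; apply Hbef'; lia).
    lia.
Qed.
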